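(* Let $a\in\mathbb C^*$ with $a\neq\pm1$. Then for every $L\ge1$ the map $s_{a,L}$ induces a Lie algebra isomorphism $\mathfrak{OA}_{a,L}\cong(\mathbb C[u]/u^L\mathbb C[u])\otimes\mathfrak{sl}_2$, and $s_a$ induces an isomorphism $\widehat{\mathfrak{OA}}_a\cong\mathfrak{sl}_2[[u]]$ which carries $\widehat{\mathfrak{OA}}_a^L$ onto $u^L\mathfrak{sl}_2[[u]]$ for every $L\ge0$.
   Context: Work over $\mathbb C$. $\mathfrak{sl}_2$ has basis $e,f,h$ with $[e,f]=h$, $[h,e]=2e$, $[h,f]=-2f$. $L(\mathfrak{sl}_2)=\mathbb C[t,t^{-1}]\otimes\mathfrak{sl}_2$ is the loop algebra with bracket $[p(t)x,q(t)y]=p(t)q(t)[x,y]$. The Onsager algebra is the Lie subalgebra $\mathfrak{OA}=\{p(t)e+p(t^{-1})f+q(t)h:\ p,q\in\mathbb C[t,t^{-1}],\ q(t^{-1})=-q(t)\}$ of $L(\mathfrak{sl}_2)$. For $a\in\mathbb C^*$, $U_a(t)=t^2-(a+a^{-1})t+1$ if $a^2\neq1$ and $U_a(t)=t-a$ if $a=\pm1$. For a reciprocal polynomial $P$ (nonconstant monic with $P(t)=\pm t^{\deg P}P(t^{-1})$), $\mathfrak I_{P(t)}=\{p(t)e+p(t^{-1})f+q(t)h\in\mathfrak{OA}:\ p(t),q(t)\in P(t)\mathbb C[t,t^{-1}]\}$. For $a\in\mathbb C^*$ and $L\ge1$ let $\mathfrak{OA}_{a,L}=\mathfrak{OA}/\mathfrak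 I_{U_a(t)^L}$, and $\mathfrak{OA}_{a,0}=0$; for $L\ge K$ there are canonical surjections $\mathfrak{OA}_{a,L}\to\mathfrak{OA}_{a,K}$. $\widehat{\mathfrak{OA}}_a=\varprojlim_L\mathfrak{OA}_{a,L}$ is the inverse limit Lie algebra, $\psi_{a,L}:\widehat{\mathfrak{OA}}_a\to\mathfrak{OA}_{a,L}$ the canonical map, and $\widehat{\mathfrak{OA}}_a^L=\ker\psi_{a,L}$. For $a\in\mathbb C^*$, $s_a:\mathfrak{OA}\to\mathfrak{sl}_2[[u]]=\mathbb C[[u]]\otimes\mathfrak{sl}_2$ is the Lie homomorphism given by Taylor expansion at $t=a$ in $u=t-a$: $p(t)x\mapsto\sum_{j\ge0}\frac{p^{(j)}(a)}{j!}u^jx$; $s_{a,L}$ is its composition with the projection to $\mathfrak{sl}_2[[u]]/u^L\mathfrak{sl}_2[[u]]\cong(\mathbb C[u]/u^L\mathbb C[u])\otimes\mathfrak{sl}_2$. *)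

(* Defs.v *)
From mathcomp Require Import all_boot all_algebra.
From mathcomp Require Import finmap.
From mathcomp Require Export reals complex.

Set Implicit Arguments.
Unset Strict Implicit.
Unset Printing Implicit Defensive.

Import GRing.Theory.
Local Open Scope ring_scope.

Section Defs.
Variable F : fieldType.

(* Laurent polynomials F[t,t^-1]: finitely supported coefficient maps
   Z -> F ; p represents  sum_k (p k) t^k.                              *)
Definition laurent := {fsfun int -> F with 0}.

Definition ladd (p q : laurent) : laurent :=
  [fsfun k in (finsupp p `|` finsupp q)%fset => (p k + q k)%R | 0].
Definition lopp (p : laurent) : laurent :=
  [fsfun k in finsupp p => (- p k)%R | 0].
Definition lscale (c : F) (p : laurent) : laurent :=
  [fsfun k in finsupp p => (c * p k)%R | 0].
Definition lmul (p q : laurent) : laurent :=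
  [fsfun k in [fset (i + j)%R | i in finsupp p, j in finsupp q]%fset =>
     (\sum_(i <- finsupp p) p i * q (k - i))%R | 0].
Definition linv (p : laurent) : laurent :=
  [fsfun k in [fset (- i)%R | i in finsupp p]%fset => p (- k)%R | 0].
Definition lpoly (P : {poly F}) : laurent :=
  [fsfun k in [fset (i%:Z) | i in iota 0 (size P)]%fset =>
     (match k with Posz n => P`_n | Negz _ => 0 end) | 0].

Definition ldvd (P : {poly F}) (p : laurent) : Prop :=
  exists r : laurent, p = lmul (lpoly P) r.

(* sl2 with basis e, f, h : x = (xe, xf, xh) stands for xe e + xf f + xh h. *)
Definition sl2 := (F * F * F)%type.
Definition sl2_e (x : sl2) : F := x.1.1.
Definition sl2_f (x : sl2) : F := x.1.2.
Definition sl2_h (x : sl2) : F := x.2.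
Definition mk_sl2 (a b c : F) : sl2 := (a, b, c).
(* vector space operations (the zmodType structure of a product is used for +) *)
Definition sl2_scale (c : F) (x : sl2) : sl2 :=
  mk_sl2 (c * sl2_e x) (c * sl2_f x) (c * sl2_h x).
(* the bracket with [e,f]=h, [h,e]=2e, [h,f]=-2f *)
Definition sl2_br (x y : sl2) : sl2 :=
  mk_sl2 (2 * (sl2_h x * sl2_e y - sl2_e x * sl2_h y))
         (2 * (sl2_f x * sl2_h y - sl2_h x * sl2_f y))
         (sl2_e x * sl2_f y - sl2_f x * sl2_e y).

(* The loop algebra L(sl2) = F[t,t^-1] (x) sl2 :
   p(t) e + p'(t) f + q(t) h.                                          *)
Record loop := Loop { lp_e : laurent; lp_f : laurent; lp_h : laurent }.

Definition loop_add (x y : loop) : loop :=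
  Loop (ladd (lp_e x) (lp_e y)) (ladd (lp_f x) (lp_f y)) (ladd (lp_h x) (lp_h y)).
Definition loop_opp (x : loop) : loop :=
  Loop (lopp (lp_e x)) (lopp (lp_f x)) (lopp (lp_h x)).
Definition loop_sub (x y : loop) : loop := loop_add x (loop_opp y).
Definition loop_scale (c : F) (x : loop) : loop :=
  Loop (lscale c (lp_e x)) (lscale c (lp_f x)) (lscale c (lp_h x)).
(* [p x, q y] = p q [x,y] *)
Definition loop_br (x y : loop) : loop :=
  Loop (lscale 2 (ladd (lmul (lp_h x) (lp_e y)) (lopp (lmul (lp_e x) (lp_h y)))))
       (lscale 2 (ladd (lmul (lp_f x) (lp_h y)) (lopp (lmul (lp_h x) (lp_f y)))))
       (ladd (lmul (lp_e x) (lp_f y)) (lopp (lmul (lp_f x) (lp_e y)))).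

(* The Onsager algebra: p(t) e + p(t^-1) f + q(t) h with q(t^-1) = -q(t). *)
Definition isOA (x : loop) : Prop :=
  lp_f x = linv (lp_e x) /\ linv (lp_h x) = lopp (lp_h x).

Definition inI (P : {poly F}) (x : loop) : Prop :=
  isOA x /\ ldvd P (lp_e x) /\ ldvd P (lp_h x).

Definition Ua (a : F) : {poly F} :=
  if a ^+ 2 != 1 then 'X^2 - (a + a^-1)%:P * 'X + 1 else 'X - a%:P.

(* sl2[[u]] = F[[u]] (x) sl2 : sum_j u^j g_j, represented by j |-> g_j. *)
Definition sl2ps := nat -> sl2.
Definition sl2ps_add (g k : sl2ps) : sl2ps := fun n => g n + k n.
Definition sl2ps_scale (c : F) (g : sl2ps) : sl2ps := fun n => sl2_scale c (g n).
Definition sl2ps_br (g k : sl2ps) : sl2ps :=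
  fun n => \sum_(i < n.+1) sl2_br (g i) (k (n - i)%N).
(* (F[u]/u^L F[u]) (x) sl2 : sum_(j<L) u^j g_j, represented by j |-> g_j. *)
Definition sl2trunc (L : nat) := 'I_L -> sl2.
Definition sl2trunc_add (L : nat) (g k : sl2trunc L) : sl2trunc L :=
  fun n => g n + k n.
Definition sl2trunc_scale (L : nat) (c : F) (g : sl2trunc L) : sl2trunc L :=
  fun n => sl2_scale c (g n).
(* u^i x * u^j y = u^(i+j) [x,y], truncated at u^L *)
Definition sl2trunc_br (L : nat) (g k : sl2trunc L) : sl2trunc L :=
  fun n => \sum_(i < (val n).+1)
     sl2_br (g (insubd n (val i))) (k (insubd n (val n - val i)%N)).

(* Taylor expansion at t = a:  the coefficient p^(j)(a)/j!  of u^j,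
   using  d^j/dt^j t^k = k(k-1)...(k-j+1) t^(k-j)  for k in Z.         *)
Definition ffactz (k : int) (j : nat) : F := \prod_(i < j) (k - i%:Z)%:~R.
Definition taylor_coef (a : F) (p : laurent) (j : nat) : F :=
  \sum_(k <- finsupp p) p k * ffactz k j / (j`!)%:R * a ^ (k - j%:Z).

Definition s_a (a : F) (x : loop) : sl2ps :=
  fun j => mk_sl2 (taylor_coef a (lp_e x) j) (taylor_coef a (lp_f x) j)
                  (taylor_coef a (lp_h x) j).
Definition s_aL (a : F) (L : nat) (x : loop) : sl2trunc L :=
  fun j => s_a a x (val j).

(* The inverse limit  OAhat_a = lim_L OA/I_{U_a^L}  (OA_{a,0} = 0),
   modelled by families of representatives x : nat -> OA, x L
   representing the component in OA_{a,L}; a family is an element of the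
   inverse limit iff it is compatible with all canonical surjections
   OA_{a,L} -> OA_{a,K} (K <= L).                                        *)
Definition OAhat (a : F) (x : nat -> loop) : Prop :=
  (forall L, isOA (x L)) /\
  (forall K L, (1 <= K)%N -> (K <= L)%N -> inI (Ua a ^+ K) (loop_sub (x L) (x K))).
(* equality in the inverse limit: componentwise equality in OA_{a,L} *)
Definition OAhat_eq (a : F) (x y : nat -> loop) : Prop :=
  forall L, (1 <= L)%N -> inI (Ua a ^+ L) (loop_sub (x L) (y L)).
Definition in_OAhat_ker (a : F) (L : nat) (x : nat -> loop) : Prop :=
  L = 0%N \/ inI (Ua a ^+ L) (x L).
Definition OAhat_add (x y : nat -> loop) : nat -> loop := fun L => loop_add (x L) (y L).
Definition OAhat_scale (c : F) (x : nat -> loop) : nat -> loop :=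
  fun L => loop_scale c (x L).
Definition OAhat_br (x y : nat -> loop) : nat -> loop := fun L => loop_br (x L) (y L).

(* the map OAhat_a -> sl2[[u]] induced by s_a : its u^n coefficient is
   the u^n coefficient of s_{a,n+1}(psi_{a,n+1} x).                       *)
Definition s_hat (a : F) (x : nat -> loop) : sl2ps := fun n => s_a a (x n.+1) n.

End Defs.
Arguments s_aL {F} a L x _.

(* Main.v *)
Require Import Defs.
From mathcomp Require Import all_boot all_algebra.
From mathcomp Require Import reals complex.
From mathcomp Require Import finmap.
From mathcomp Require Import ring lra zify.
From Stdlib Require Import FunctionalExtensionality IndefiniteDescription.
Set Implicit Arguments.
Unset Strict Implicit.
Unset Printing Implicit Defensive.
Import GRing.Theory Num.Theory.
Local Open Scope ring_scope.

Section Laur.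
Variable F : numFieldType.
Implicit Types p q r : laurent F.

Lemma nz_supp p k : p k != 0 -> k \in finsupp p.
Proof. by rewrite mem_finsupp. Qed.

Lemma sum_supp (f : int -> F) (S T : {fset int}) :
  (forall k, f k != 0 -> k \in S) -> (forall k, f k != 0 -> k \in T) ->
  \sum_(k <- S) f k = \sum_(k <- T) f k.
Proof.
move=> HS HT.
rewrite (big_fset_incl _ (fsubsetUl S T)); last first.
  move=> x _ xS; apply/eqP; apply: contraNT xS; exact: HS.
rewrite -(big_fset_incl _ (fsubsetUr S T)) //.
move=> x _ xS; apply/eqP; apply: contraNT xS; exact: HT.
Qed.

Lemma laddE p q k : ladd p q k = p k + q k.
Proof.
rewrite /ladd fsfunE; case: ifP => //; rewrite in_fsetU => /norP[].
by rewrite !mem_finsupp => /negPn/eqP-> /negPn/eqP->; rewrite addr0.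
Qed.

Lemma loppE p k : lopp p k = - p k.
Proof.
rewrite /lopp fsfunE; case: ifP => //.
by rewrite !mem_finsupp => /negPn/eqP->; rewrite oppr0.
Qed.

Lemma lscaleE c p k : lscale c p k = c * p k.
Proof.
rewrite /lscale fsfunE; case: ifP => //.
by rewrite !mem_finsupp => /negPn/eqP->; rewrite mulr0.
Qed.

Lemma linvE p k : linv p k = p (- k).
Proof.
rewrite /linv fsfunE; case: ifP => // H.
apply/esym/eqP; apply: contraFT H => H.
by apply/imfsetP; exists (- k) => //=; rewrite ?opprK // nz_supp.
Qed.

Lemma lmulE p q k : lmul p q k = \sum_(i <- finsupp p) p i * q (k - i).
Proof.
rewrite /lmul fsfunE; case: ifP => // H.
symmetry; apply: big1_fset => i ip _.
apply/eqP; rewrite mulf_eq0 orbC; apply/orP; left.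
apply: contraFT H => H.
apply/imfset2P; exists i => //; exists (k - i) => //.
  by rewrite nz_supp.
by rewrite addrC subrK.
Qed.

Definition zc (W : {poly F}) (z : int) : F :=
  match z with Posz n => W`_n | Negz _ => 0 end.

Lemma lpolyE (P : {poly F}) k : lpoly P k = zc P k.
Proof.
rewrite /lpoly fsfunE; case: ifP => // H.
case: k H => // n H; apply/esym/eqP; apply: contraFT H => H.
apply/imfsetP; exists n => //=.
rewrite mem_iota /= add0n; apply: contraNT H; rewrite -leqNgt => H.
by rewrite /zc nth_default.
Qed.

End Laur.


Section Comb.
Variable F : numFieldType.

Definition tcf (b : F) (k : int) (n : nat) : F :=
  ffactz F k n / (n`!)%:R * b ^ (k - n%:Z).

Lemma ffactz0 k : ffactz F k 0 = 1.
Proof. by rewrite /ffactz big_ord0. Qed.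

Lemma ffactzS k n : ffactz F k n.+1 = ffactz F k n * (k - n%:Z)%:~R.
Proof. by rewrite /ffactz big_ord_recr. Qed.

Lemma ffactzSS k n : ffactz F (k + 1) n.+1 = (k + 1)%:~R * ffactz F k n.
Proof.
rewrite /ffactz big_ord_recl /= subr0; congr (_ * _).
apply: eq_bigr => i _; congr (_ %:~R).
rewrite /bump /= add1n -addn1 PoszD; ring.
Qed.

Lemma ffactz_0n n : ffactz F 0 n.+1 = 0.
Proof. by rewrite /ffactz big_ord_recl /= subr0 mul0r. Qed.

Lemma fact_nz n : (n`!)%:R != 0 :> F.
Proof. by rewrite pnatr_eq0 -lt0n fact_gt0. Qed.

Lemma tcf_rec0 b k : b != 0 -> tcf b (k + 1) 0 = b * tcf b k 0.
Proof.
move=> b0; rewrite /tcf !ffactz0 fact0 !subr0 expfzDr // expr1z; ring.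
Qed.

Lemma tcf_rec b k n : b != 0 ->
  tcf b (k + 1) n.+1 = tcf b k n + b * tcf b k n.+1.
Proof.
move=> b0; rewrite /tcf ffactzSS ffactzS factS natrM.
have -> : k + 1 - (n.+1)%:Z = k - n%:Z by rewrite -addn1 PoszD; ring.
have -> : b ^ (k - n%:Z) = b * b ^ (k - (n.+1)%:Z).
  by rewrite -[in LHS](subrK 1 (k - n%:Z)) expfzDr // expr1z mulrC -addn1 PoszD opprD addrA.
rewrite rmorphD /= rmorphB /= rmorph1 /=.
have h1 := fact_nz n.
have h2 : (n.+1)%:R != 0 :> F by rewrite pnatr_eq0.
rewrite -[(n.+1)%:R]natr1 in h2 *.
field; rewrite h2 h1 //.
Qed.

Lemma tcf_0 b n : tcf b 0 n = (n == 0)%:R.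
Proof.
case: n => [|n]; first by rewrite /tcf ffactz0 fact0 subr0 expr0z divr1 mulr1.
by rewrite /tcf ffactz_0n !mul0r.
Qed.

Lemma int_zero (g : int -> F) b : b != 0 -> (forall j, g (j + 1) = b * g j) ->
  g 0 = 0 -> forall j, g j = 0.
Proof.
move=> b0 Hg g0; have Hpos : forall n : nat, g n = 0.
  by elim=> [//|n IH]; rewrite -addn1 PoszD Hg IH mulr0.
have Hneg : forall n : nat, g (- n%:Z) = 0.
  elim=> [|n IH]; first by rewrite oppr0.
  have := Hg (- (n.+1)%:Z).
  have -> : - (n.+1)%:Z + 1 = - n%:Z by rewrite -addn1 PoszD; ring.
  rewrite IH => /esym/eqP; rewrite mulf_eq0 (negbTE b0) /= => /eqP //.
case=> n; first exact: Hpos.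
by rewrite NegzE; apply: Hneg.
Qed.

Definition Sv b i j n := \sum_(l < n.+1) tcf b i l * tcf b j (n - l).
Definition Dv b i j n := tcf b (i + j) n - Sv b i j n.

Lemma Sv_rec b i j m : b != 0 ->
  Sv b i (j + 1) m.+1 = Sv b i j m + b * Sv b i j m.+1.
Proof.
move=> b0; rewrite /Sv [LHS]big_ord_recr /= subnn tcf_rec0 //.
rewrite [X in _ = _ + b * X]big_ord_recr /= subnn.
have -> : \sum_(l < m.+1) tcf b i l * tcf b (j + 1) (m.+1 - l) =
    \sum_(l < m.+1) tcf b i l * tcf b j (m - l) +
    b * \sum_(l < m.+1) tcf b i l * tcf b j (m.+1 - l).
  rewrite big_distrr /= -big_split /=; apply: eq_bigr => l _.
  rewrite subSn; last by rewrite -ltnS.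
  by rewrite tcf_rec // mulrDr; congr (_ + _); exact: mulrCA.
by rewrite mulrDr addrA; congr (_ + _); exact: mulrCA.
Qed.

Lemma Dv0 b i n : Dv b i 0 n = 0.
Proof.
rewrite /Dv /Sv addr0 big_ord_recr /= subnn tcf_0 eqxx mulr1.
rewrite big1 ?add0r ?subrr // => l _; rewrite tcf_0.
by rewrite subn_eq0 leqNgt ltn_ord mulr0.
Qed.

Lemma Dv_all b i n j : b != 0 -> Dv b i j n = 0.
Proof.
move=> b0; elim: n j => [|m IH] j0; apply: (@int_zero (fun j => Dv b i j _) b) => //;
  try exact: Dv0; move=> j.
  rewrite /Dv /Sv !big_ord1 !subn0 addrA !tcf_rec0 // mulrBr; congr (_ - _); exact: mulrCA.
rewrite /Dv Sv_rec // addrA tcf_rec //.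
have := IH j; rewrite /Dv => /eqP; rewrite subr_eq0 => /eqP ->.
by rewrite mulrBr opprD addrACA subrr add0r.
Qed.

Lemma vandermonde b i j n : b != 0 ->
  tcf b (i + j) n = \sum_(l < n.+1) tcf b i l * tcf b j (n - l).
Proof.
by move=> b0; apply/eqP; rewrite -subr_eq0; apply/eqP; exact: (Dv_all i n j b0).
Qed.

End Comb.


Section Tay.
Variable F : numFieldType.
Implicit Types p q r : laurent F.

Lemma tc_sum b p n (S : {fset int}) : (forall k, p k != 0 -> k \in S) ->
  taylor_coef b p n = \sum_(k <- S) p k * tcf b k n.
Proof.
move=> HS; transitivity (\sum_(k <- finsupp p) p k * tcf b k n).
  by apply: eq_bigr => k _; rewrite /tcf !mulrA.
apply: sum_supp => k; rewrite mulf_eq0 negb_or => /andP[H _] //.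
  exact: nz_supp.
exact: HS.
Qed.

Lemma tc_add b p q n :
  taylor_coef b (ladd p q) n = taylor_coef b p n + taylor_coef b q n.
Proof.
pose S := (finsupp p `|` finsupp q)%fset.
have Hp : forall k, p k != 0 -> k \in S by move=> k /nz_supp H; rewrite in_fsetU H.
have Hq : forall k, q k != 0 -> k \in S by move=> k /nz_supp H; rewrite in_fsetU H orbT.
rewrite (tc_sum _ _ Hp) (tc_sum _ _ Hq) (@tc_sum _ (ladd p q) _ S); last first.
  move=> k; rewrite laddE => H; rewrite in_fsetU; apply/orP.
  case: (boolP (p k == 0)) => [/eqP Hk|/nz_supp]; last by left.
  by right; apply: nz_supp; move: H; rewrite Hk add0r.
by rewrite -big_split /=; apply: eq_bigr => k _; rewrite laddE mulrDl.
Qed.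

Lemma tc_self b p n : taylor_coef b p n = \sum_(k <- finsupp p) p k * tcf b k n.
Proof. by apply: tc_sum => k /nz_supp. Qed.

Lemma tc_opp b p n : taylor_coef b (lopp p) n = - taylor_coef b p n.
Proof.
rewrite (@tc_sum _ (lopp p) _ (finsupp p)) ?tc_self; last first.
  by move=> k; rewrite loppE oppr_eq0 => /nz_supp.
by rewrite -sumrN; apply: eq_bigr => k _; rewrite loppE mulNr.
Qed.

Lemma tc_scale b c p n : taylor_coef b (lscale c p) n = c * taylor_coef b p n.
Proof.
rewrite (@tc_sum _ (lscale c p) _ (finsupp p)) ?tc_self; last first.
  by move=> k; rewrite lscaleE mulf_eq0 negb_or => /andP[_ /nz_supp].
by rewrite mulr_sumr; apply: eq_bigr => k _; rewrite lscaleE mulrA.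
Qed.

Lemma leibniz b p q n : b != 0 ->
  taylor_coef b (lmul p q) n =
  \sum_(l < n.+1) taylor_coef b p l * taylor_coef b q (n - l).
Proof.
move=> b0.
pose S := [fset (i + j)%R | i in finsupp p, j in finsupp q]%fset.
rewrite (@tc_sum _ (lmul p q) _ S); last first.
  by move=> k; rewrite {1}/lmul fsfunE; case: ifP => //; rewrite eqxx.
transitivity (\sum_(i <- finsupp p) \sum_(j <- finsupp q) \sum_(l < n.+1)
   p i * q j * (tcf b i l * tcf b j (n - l))).
  under eq_bigr do rewrite lmulE mulr_suml.
  rewrite exchange_big /=; apply: eq_big_seq => i ip.
  rewrite (@sum_supp _ _ S [fset (j + i)%R | j in finsupp q]%fset); first last.
  - move=> k; rewrite mulf_eq0 negb_or mulf_eq0 negb_or => /andP[/andP[_ H] _].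
    by apply/imfsetP; exists (k - i); [exact: nz_supp | rewrite subrK].
  - move=> k; rewrite mulf_eq0 negb_or mulf_eq0 negb_or => /andP[/andP[_ H] _].
    apply/imfset2P; exists i; first exact: ip.
    by exists (k - i); [exact: nz_supp H | rewrite addrC subrK].
  rewrite big_imfset /=; last by move=> x y _ _ /addIr.
  apply: eq_bigr => j _; rewrite addrK addrC vandermonde // mulr_sumr.
  by apply: eq_bigr => l _; ring.

transitivity (\sum_(l < n.+1) \sum_(i <- finsupp p) \sum_(j <- finsupp q)
   p i * q j * (tcf b i l * tcf b j (n - l))).
  under eq_bigr do rewrite exchange_big.
  by rewrite exchange_big.
apply: eq_bigr => l _; rewrite !tc_self.
rewrite mulr_suml; apply: eq_bigr => i _; rewrite mulr_sumr; apply: eq_bigr => j _.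
ring.
Qed.

Definition V b L p := forall n, (n < L)%N -> taylor_coef b p n = 0.

Lemma VM b K M p q : b != 0 -> V b K p -> V b M q -> V b (K + M) (lmul p q).
Proof.
move=> b0 Hp Hq n Hn; rewrite leibniz //; apply: big1 => l _.
case: (ltnP l K) => H; first by rewrite Hp // mul0r.
rewrite Hq ?mulr0 //.
have := ltn_ord l; rewrite ltnS => Hl.
lia.
Qed.

End Tay.


Section Shift.
Variable F : numFieldType.
Implicit Types p q r : laurent F.

Definition lsh (m : nat) (W : {poly F}) : laurent F :=
  [fsfun k in [fset (i%:Z - m%:Z)%R | i in iota 0 (size W)]%fset =>
     zc W (k + m%:Z) | 0].

Lemma lshE m W k : lsh m W k = zc W (k + m%:Z).
Proof.
rewrite /lsh fsfunE; case: ifP => // H.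
case E: (k + m%:Z) => [n|n] //=; apply/esym/eqP; apply: contraFT H => H.
apply/imfsetP; exists n => /=; last by rewrite -E addrK.
rewrite mem_iota add0n /=; apply: contraNT H; rewrite -leqNgt => H.
by rewrite nth_default.
Qed.

Lemma zc_sub (W : {poly F}) (n j : nat) :
  zc W (n%:Z - j%:Z) = if (j <= n)%N then W`_(n - j) else 0.
Proof.
case: leqP => H; first by rewrite subzn.
have -> : n%:Z - j%:Z = Negz (j - n).-1.
  rewrite NegzE prednK ?subn_gt0 // -subzn ?opprB //; exact: ltnW.
by [].
Qed.

Lemma zc_neg (W : {poly F}) (t j : nat) : zc W (Negz t - j%:Z) = 0.
Proof.
by have -> : Negz t - j%:Z = Negz (t + j) by rewrite !NegzE -addSn PoszD opprD.
Qed.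

Lemma sum_iota0 n (f : nat -> F) :
  \sum_(j <- iota 0 n) f j = \sum_(j < n) f j.
Proof. by rewrite -(big_mkord xpredT) /index_iota subn0. Qed.

Lemma sum_ext (A B : nat) (f : nat -> F) : (forall j, (A <= j)%N -> f j = 0) ->
  (A <= B)%N -> \sum_(j < A) f j = \sum_(j < B) f j.
Proof.
move=> Hf AB; rewrite (big_ord_widen B) // big_mkcond /=.
apply: eq_bigr => j _; case: ltnP => // H; by rewrite Hf.
Qed.

Lemma sum_lpoly (Q : {poly F}) (g : int -> F) :
  \sum_(i <- finsupp (lpoly Q)) lpoly Q i * g i = \sum_(j < size Q) Q`_j * g j.
Proof.
rewrite (@sum_supp _ _ _ [fset (i%:Z) | i in iota 0 (size Q)]%fset); first last.
- move=> k; rewrite mulf_eq0 negb_or => /andP[H _].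
  rewrite lpolyE in H; case: k H => [j H|j]; last by rewrite /= eqxx.
  apply/imfsetP; exists j => //=.
  rewrite mem_iota add0n /=; apply: contraNT H; rewrite -leqNgt => H.
  by rewrite /= nth_default.
- by move=> k; rewrite mulf_eq0 negb_or => /andP[/nz_supp H _].
rewrite big_imfset /=; last by move=> x y _ _ [].
rewrite undup_id ?iota_uniq // sum_iota0; apply: eq_bigr => j _; by rewrite lpolyE.
Qed.

Lemma LS (Q W : {poly F}) m : lmul (lpoly Q) (lsh m W) = lsh m (Q * W).
Proof.
apply/fsfunP => k; rewrite lmulE sum_lpoly lshE.
under eq_bigr do rewrite lshE.
case E: (k + m%:Z) => [n|t] /=.
  have E' : forall j : nat, k - j%:Z + m%:Z = n%:Z - j%:Z.
    by move=> j; rewrite -E; ring.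
  under eq_bigr do rewrite E' zc_sub.
  rewrite coefM.
  pose g j := Q`_j * (if (j <= n)%N then W`_(n - j) else 0).
  rewrite (@sum_ext _ (size Q + n.+1) g); first last.
  - exact: leq_addr.
  - by move=> j Hj; rewrite /g nth_default // mul0r.
  transitivity (\sum_(j < n.+1) g j); last first.
    by apply: eq_bigr => j _; rewrite /g -ltnS ltn_ord.
  symmetry; apply: sum_ext; last exact: leq_addl.
  by move=> j Hj; rewrite /g leqNgt Hj mulr0.
have E' : forall j : nat, k - j%:Z + m%:Z = Negz t - j%:Z.
  by move=> j; rewrite -E; ring.
under eq_bigr do rewrite E' zc_neg mulr0.
by rewrite big1.
Qed.

Lemma lpoly_lsh0 W : lpoly W = lsh 0 W.
Proof. by apply/fsfunP => k; rewrite lpolyE lshE addr0. Qed.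

Lemma rep p : exists m W, p = lsh m W.
Proof.
pose m := \max_(k <- finsupp p) absz k.
have Hm : forall k, p k != 0 -> (absz k <= m)%N.
  move=> k /nz_supp Hk; exact: (@leq_bigmax_seq _ (finsupp p : seq int) xpredT (fun k : int => absz k) k Hk isT).
exists m, (\poly_(i < (2 * m).+1) p (i%:Z - m%:Z)).
apply/fsfunP => k; rewrite lshE.
case E: (k + m%:Z) => [n|t] /=; rewrite ?coef_poly.
  have -> : n%:Z - m%:Z = k by rewrite -E addrK.
  case: ltnP => // Hn; apply/eqP; apply: contraLR Hn => /Hm H.
  rewrite -ltnNge; lia.
apply/eqP; apply: contraT => /Hm H; exfalso; lia.
Qed.

Lemma lsh_Xm m W : lsh m ('X^m * W) = lpoly W.
Proof.
apply/fsfunP => k; rewrite lshE lpolyE; case: k => [j|t] /=.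
  by rewrite coefXnM ltnNge leq_addl /= addnK.
rewrite NegzE addrC zc_sub; case: ifP => // H.
by rewrite coefXnM ifT //; lia.
Qed.

Lemma V_lsh b L m W : b != 0 -> V b L (lsh m W) <-> V b L (lpoly W).
Proof.
move=> b0; split => H.
  rewrite -(lsh_Xm m) -LS -(add0n L); apply: VM => //; by move=> n.
have -> : lsh m W = lmul (lpoly W) (lsh m 1) by rewrite LS mulr1.
rewrite -(addn0 L); apply: VM => //; by move=> n.
Qed.

Lemma linvK p : linv (linv p) = p.
Proof. by apply/fsfunP => k; rewrite !linvE opprK. Qed.

Lemma linv_add p q : linv (ladd p q) = ladd (linv p) (linv q).
Proof. by apply/fsfunP => k; rewrite !(linvE, laddE). Qed.

Lemma linv_opp p : linv (lopp p) = lopp (linv p).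
Proof. by apply/fsfunP => k; rewrite !(linvE, loppE). Qed.

Lemma sum_linv p (g : int -> F) :
  \sum_(k <- finsupp (linv p)) linv p k * g k = \sum_(k <- finsupp p) p k * g (- k).
Proof.
rewrite (@sum_supp _ _ _ [fset (- k)%R | k in finsupp p]%fset); first last.
- move=> k; rewrite mulf_eq0 negb_or => /andP[H _].
  apply/imfsetP; exists (- k); last by rewrite opprK.
  by apply: nz_supp; rewrite -linvE.
- by move=> k; rewrite mulf_eq0 negb_or => /andP[/nz_supp H _].
rewrite big_imfset /=; last by move=> x y _ _ /oppr_inj.
by apply: eq_bigr => k _; rewrite linvE opprK.
Qed.

Lemma linv_lmul p q : linv (lmul p q) = lmul (linv p) (linv q).
Proof.
apply/fsfunP => k; rewrite linvE !lmulE sum_linv.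
by apply: eq_bigr => i _; rewrite linvE; congr (_ * q _); ring.
Qed.

Lemma tcf0 (b : F) k : tcf b k 0 = b ^ k.
Proof. by rewrite /tcf ffactz0 fact0 divr1 mul1r subr0. Qed.

Lemma tc_linv0 b p : taylor_coef b (linv p) 0 = taylor_coef b^-1 p 0.
Proof.
rewrite !tc_self sum_linv; apply: eq_bigr => k _.
by rewrite !tcf0 exprz_inv.
Qed.

Lemma coef_XaddC (b : F) (i n : nat) : b != 0 ->
  (('X + b%:P) ^+ i)`_n = tcf b i n.
Proof.
move=> b0; elim: i n => [|i IH] n.
  by rewrite expr0 coef1 tcf_0.
rewrite exprSr mulrDr coefD coefMX coefMC -addn1 PoszD.
case: n => [|n] /=; first by rewrite add0r tcf_rec0 // IH mulrC.
by rewrite tcf_rec // !IH mulrC.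
Qed.

Lemma tc_lpoly (b : F) P n : b != 0 ->
  taylor_coef b (lpoly P) n = (P \Po ('X + b%:P))`_n.
Proof.
move=> b0; rewrite tc_self sum_lpoly coef_comp_poly.
by apply: eq_bigr => j _; rewrite coef_XaddC.
Qed.

Lemma XsubC_comp (b : F) : ('X - b%:P) \Po ('X + b%:P) = 'X :> {poly F}.
Proof. by rewrite comp_polyB comp_polyX comp_polyC addrK. Qed.

Lemma PL1 (b : F) L P : (forall n, (n < L)%N -> (P \Po ('X + b%:P))`_n = 0) ->
  exists W, P = ('X - b%:P) ^+ L * W.
Proof.
move=> H; set Q := P \Po ('X + b%:P).
have HT : take_poly L Q = 0.
  by apply/polyP => i; rewrite coef_take_poly coef0; case: ifP => // /H.
have HQ := poly_take_drop L Q; rewrite HT add0r in HQ.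
exists (drop_poly L Q \Po ('X - b%:P)).
by rewrite -[P](comp_polyXaddC_K _ b) -/Q -{1}HQ comp_polyM comp_Xn_poly mulrC.
Qed.

Lemma PL2 (b : F) L P W : P = ('X - b%:P) ^+ L * W ->
  forall n, (n < L)%N -> (P \Po ('X + b%:P))`_n = 0.
Proof.
move=> -> n Hn.
rewrite comp_polyM -comp_Xn_poly -comp_polyA XsubC_comp comp_polyXr.
by rewrite coefXnM Hn.
Qed.

Lemma Vlpoly (b : F) L P : b != 0 ->
  V b L (lpoly P) <-> exists W, P = ('X - b%:P) ^+ L * W.
Proof.
move=> b0; split.
  by move=> H; apply: PL1 => n Hn; rewrite -tc_lpoly // H.
by move=> [W HW] n Hn; rewrite tc_lpoly //; apply: (PL2 HW).
Qed.

Lemma Lpow (b : F) L : b != 0 -> V b L (linv (lpoly (('X - b^-1%:P) ^+ L))).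
Proof.
move=> b0; elim: L => [|L IH]; first by move=> n.
rewrite exprS lpoly_lsh0 -LS linv_lmul -lpoly_lsh0 -add1n.
apply: VM => // n; rewrite ltnS leqn0 => /eqP ->.
rewrite tc_linv0 tc_lpoly ?invr_eq0 //.
by apply: (@PL2 _ 1 _ 1) => //; rewrite expr1 mulr1.
Qed.

Lemma Dlem b L p : b != 0 -> V b^-1 L p -> V b L (linv p).
Proof.
move=> b0 H; have [m [W Hp]] := rep p.
have b0' : b^-1 != 0 by rewrite invr_eq0.
move: H; rewrite Hp V_lsh // Vlpoly // => -[Z ->].
rewrite -LS linv_lmul.
have HV0 : V b 0 (linv (lsh m Z)) by move=> n.
by move: (VM b0 (Lpow (L:=L) b0) HV0); rewrite addn0.
Qed.

Lemma Dlem' b L p : b != 0 -> V b L (linv p) -> V b^-1 L p.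
Proof.
move=> b0 H; rewrite -[p]linvK; apply: Dlem; first by rewrite invr_eq0.
by rewrite invrK.
Qed.

End Shift.


Lemma V_mul_l (F : numFieldType) (b : F) L (p q : laurent F) :
  b != 0 -> V b L p -> V b L (lmul p q).
Proof.
move=> b0 H; have H0 : V b 0 q by move=> n.
by move: (VM b0 H H0); rewrite addn0.
Qed.

Lemma V_opp (F : numFieldType) (b : F) L (p : laurent F) : V b L (lopp p) <-> V b L p.
Proof.
split => H n Hn; have := H n Hn; rewrite ?tc_opp //.
by move=> /eqP; rewrite oppr_eq0 => /eqP.
by move=> ->; rewrite oppr0.
Qed.

Lemma tc_sub (F : numFieldType) (b : F) (p q : laurent F) n :
  taylor_coef b (ladd p (lopp q)) n = taylor_coef b p n - taylor_coef b q n.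
Proof. by rewrite tc_add tc_opp. Qed.

Lemma compXL (F : numFieldType) (b : F) L :
  (('X - b%:P) ^+ L) \Po ('X + b%:P) = 'X^L.
Proof. by rewrite -comp_Xn_poly -comp_polyA XsubC_comp comp_polyXr. Qed.

Lemma jet (F : numFieldType) (b c : F) L (y : nat -> F) : b != 0 -> c != 0 -> b != c ->
  exists P, (forall n, (n < L)%N -> taylor_coef b (lpoly P) n = y n) /\ V c L (lpoly P).
Proof.
move=> b0 c0 bc.
set T' := \poly_(n < L) y n.
have cop : coprimep (('X - b%:P) ^+ L) (('X - c%:P) ^+ L).
  apply: coprimep_expl; apply: coprimep_expr; apply: coprimep_XsubC2.
  by rewrite subr_eq0 eq_sym.
have /Bezout_eq1_coprimepP [[u1 u2] /= Hu] := cop.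
exists (u2 * ('X - c%:P) ^+ L * (T' \Po ('X - b%:P))); split.
  move=> n Hn; rewrite tc_lpoly //.
  have -> : u2 * ('X - c%:P) ^+ L = 1 - u1 * ('X - b%:P) ^+ L.
    by rewrite -Hu addrAC subrr add0r.
  rewrite comp_polyM comp_polyB comp_polyM compXL -comp_polyA XsubC_comp comp_polyXr.
  rewrite comp_polyC mulrBl mul1r coefB mulrAC coefMXn Hn subr0 coef_poly Hn //.
apply/Vlpoly => //; exists (u2 * (T' \Po ('X - b%:P))).
by rewrite [u2 * _]mulrC -mulrA.
Qed.

Lemma sum_sl2 (F : numFieldType) (I : Type) (r : seq I) (P : pred I) (g : I -> sl2 F) :
  \sum_(i <- r | P i) g i = mk_sl2 (\sum_(i <- r | P i) sl2_e (g i))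
     (\sum_(i <- r | P i) sl2_f (g i)) (\sum_(i <- r | P i) sl2_h (g i)).
Proof.
elim: r => [|i r IH]; first by rewrite !big_nil.
rewrite !big_cons; case: (P i) => //; rewrite IH.
by [].
Qed.

Lemma s_a_add (F : numFieldType) (a : F) (x y : loop F) n :
  s_a a (loop_add x y) n = s_a a x n + s_a a y n.
Proof. by rewrite /s_a /= !tc_add. Qed.

Lemma s_a_scale (F : numFieldType) (a : F) c (x : loop F) n :
  s_a a (loop_scale c x) n = sl2_scale c (s_a a x n).
Proof. by rewrite /s_a /= !tc_scale. Qed.

Lemma s_a_br (F : numFieldType) (a : F) (x y : loop F) n : a != 0 ->
  s_a a (loop_br x y) n = \sum_(i < n.+1) sl2_br (s_a a x i) (s_a a y (n - i)%N).
Proof.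
move=> a0; rewrite sum_sl2 /s_a /= !(tc_scale, tc_add, tc_opp, leibniz _ _ _ a0).
rewrite /sl2_br /sl2_e /sl2_f /sl2_h /mk_sl2 /=.
congr (_, _, _).
- by rewrite -mulr_sumr sumrB.
- by rewrite -mulr_sumr sumrB.
- by rewrite sumrB.
Qed.

Section Main.
Variable F : numFieldType.
Implicit Types p q r : laurent F.
Variable a : F.
Implicit Types x y : loop F.
Hypothesis a0 : a != 0.
Hypothesis a2 : a ^+ 2 != 1.

Lemma ai0 : a^-1 != 0. Proof. by rewrite invr_eq0. Qed.

Lemma a_ne_ai : a^-1 - a != 0.
Proof.
apply: contra a2; rewrite subr_eq0 => /eqP H.
by rewrite expr2 -{1}H mulVf.
Qed.

Lemma Ua_fact : Ua a = ('X - a%:P) * ('X - a^-1%:P).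
Proof.
rewrite /Ua a2 polyCD.
have h : a%:P * a^-1%:P = 1 :> {poly F} by rewrite -polyCM mulfV.
rewrite -[in LHS]h; ring.
Qed.

Lemma UaL L : Ua a ^+ L = ('X - a%:P) ^+ L * ('X - a^-1%:P) ^+ L.
Proof. by rewrite Ua_fact exprMn. Qed.

Lemma VV L p : (V a L p /\ V a^-1 L p) <-> ldvd (Ua a ^+ L) p.
Proof.
split.
  move=> [H1 H2]; have [m [W Hp]] := rep p.
  move: H1 H2; rewrite Hp !V_lsh ?ai0 // !Vlpoly ?ai0 // => -[Z1 H1] [Z2 H2].
  have : ('X - a%:P) ^+ L * ('X - a^-1%:P) ^+ L %| W.
    rewrite Gauss_dvdp; last first.
      by apply: coprimep_expl; apply: coprimep_expr; apply: coprimep_XsubC2; exact: a_ne_ai.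
    by apply/andP; split; apply/dvdpP; [exists Z1 | exists Z2]; rewrite mulrC.
  move=> /dvdpP [Z HZ]; exists (lsh m Z).
  by rewrite LS HZ UaL mulrC.
move=> [r ->]; split; apply: V_mul_l; rewrite ?ai0 // Vlpoly ?ai0 //.
  by exists (('X - a^-1%:P) ^+ L); rewrite UaL.
by exists (('X - a%:P) ^+ L); rewrite UaL mulrC.
Qed.

Lemma vanish_of_inI L x : inI (Ua a ^+ L) x ->
  [/\ V a L (lp_e x), V a L (lp_f x) & V a L (lp_h x)].
Proof.
move=> [[Hf Hh] [He Hh']].
have [e1 e2] := (VV L (lp_e x)).2 He.
have [h1 h2] := (VV L (lp_h x)).2 Hh'.
by split => //; rewrite Hf; apply: Dlem.
Qed.

Lemma inI_of_vanish L x : isOA x -> V a L (lp_e x) -> V a L (lp_f x) ->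
  V a L (lp_h x) -> inI (Ua a ^+ L) x.
Proof.
move=> [Hf Hh] He Hfv Hhv; split; first by [].
split; apply/VV; split => //; apply: Dlem' => //.
  by rewrite -Hf.
by rewrite Hh V_opp.
Qed.

Lemma s_aL_zero L x : s_aL a L x = (fun=> 0) <->
  [/\ V a L (lp_e x), V a L (lp_f x) & V a L (lp_h x)].
Proof.
split.
  move=> H; split => n Hn; have := congr1 (fun g => g (Ordinal Hn)) H;
    by rewrite /s_aL /s_a /= => -[].
move=> [He Hf Hh]; apply: functional_extensionality => j.
by rewrite /s_aL /s_a He ?Hf ?Hh // ltn_ord.
Qed.

Lemma isOA_sub x y : isOA x -> isOA y -> isOA (loop_sub x y).
Proof.
move=> [Hfx Hhx] [Hfy Hhy]; split => /=.
  by rewrite Hfx Hfy linv_add linv_opp.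
rewrite linv_add linv_opp Hhx Hhy.
by apply/fsfunP => k; rewrite !(laddE, loppE); ring.
Qed.

Lemma tc_eq_of_inI K x y : inI (Ua a ^+ K) (loop_sub x y) ->
  forall n, (n < K)%N -> s_a a x n = s_a a y n.
Proof.
move=> /vanish_of_inI [He Hf Hh] n Hn.
move: (He n Hn) (Hf n Hn) (Hh n Hn); rewrite /= !tc_sub.
move=> /eqP; rewrite subr_eq0 => /eqP E1 /eqP; rewrite subr_eq0 => /eqP E2.
move=> /eqP; rewrite subr_eq0 => /eqP E3.
by rewrite /s_a E1 E2 E3.
Qed.

Lemma inI_of_eq K x y : isOA x -> isOA y ->
  (forall n, (n < K)%N -> s_a a x n = s_a a y n) -> inI (Ua a ^+ K) (loop_sub x y).
Proof.
move=> ox oy E; apply: inI_of_vanish; first exact: isOA_sub.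
- move=> n Hn; have := E n Hn; rewrite /s_a => -[E1 _ _].
  by rewrite /= tc_sub E1 subrr.
- move=> n Hn; have := E n Hn; rewrite /s_a => -[_ E1 _].
  by rewrite /= tc_sub E1 subrr.
- move=> n Hn; have := E n Hn; rewrite /s_a => -[_ _ E1].
  by rewrite /= tc_sub E1 subrr.
Qed.

Lemma surjL L (y : sl2trunc F L) : exists x, isOA x /\ s_aL a L x = y.
Proof.
pose ye n := if (insub n : option 'I_L) is Some i then sl2_e (y i) else 0.
pose yf n := if (insub n : option 'I_L) is Some i then sl2_f (y i) else 0.
pose yh n := if (insub n : option 'I_L) is Some i then sl2_h (y i) else 0.
have aai : a != a^-1.
  by apply/eqP => H; move: a_ne_ai; rewrite -H subrr eqxx.
have [P1 [H1 V1]] := jet L ye a0 ai0 aai.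
have [P2 [H2 V2]] := jet L yf a0 ai0 aai.
have [P3 [H3 V3]] := jet L yh a0 ai0 aai.
have W1 := Dlem a0 V1; have W2 := Dlem a0 V2; have W3 := Dlem a0 V3.
pose e := ladd (lpoly P1) (linv (lpoly P2)).
pose h := ladd (lpoly P3) (lopp (linv (lpoly P3))).
exists (Loop e (linv e) h); split.
  split => //=; apply/fsfunP => k; rewrite /h !(linvE, laddE, loppE) opprK; ring.
apply: functional_extensionality => j; rewrite /s_aL /s_a /= /e /h.
rewrite linv_add linvK !tc_add !tc_opp H1 ?H2 ?H3 ?W1 ?W2 ?W3 //.
rewrite /ye /yf /yh valK addr0 add0r subr0.
by case: (y j) => [[? ?] ?].
Qed.

End Main.


Section Part2.
Variable F : numFieldType.
Variable a : F.
Implicit Types x y : nat -> loop F.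
Hypothesis a0 : a != 0.
Hypothesis a2 : a ^+ 2 != 1.

Lemma compat x : OAhat a x -> forall L n, (n < L)%N -> s_hat a x n = s_a a (x L) n.
Proof.
move=> [Hoa Hc] L n Hn; rewrite /s_hat; symmetry.
apply: (tc_eq_of_inI a0 a2 (K := n.+1)) => //.
exact: Hc.
Qed.

Lemma hat_inj x y : OAhat a x -> OAhat a y ->
  (s_hat a x = s_hat a y <-> OAhat_eq a x y).
Proof.
move=> hx hy; split.
  move=> E L L1; apply: inI_of_eq => //; first exact: hx.1.
    exact: hy.1.
  move=> n Hn; rewrite -(compat hx Hn) -(compat hy Hn) E //.
move=> E; apply: functional_extensionality => n; rewrite /s_hat.
exact: (tc_eq_of_inI a0 a2 (E n.+1 isT)).
Qed.

Lemma hat_surj (g : sl2ps F) : exists x, OAhat a x /\ s_hat a x = g.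
Proof.
have Hs : forall L, exists z, isOA z /\ s_aL a L.+1 z = (fun j => g (val j)).
  by move=> L; apply: surjL.
pose x L := proj1_sig (constructive_indefinite_description _ (Hs L)).
have Hx : forall L, isOA (x L) /\ s_aL a L.+1 (x L) = (fun j => g (val j)).
  by move=> L; rewrite /x; case: constructive_indefinite_description.
have Hx' : forall L n, (n <= L)%N -> s_a a (x L) n = g n.
  move=> L n Hn; have := congr1 (fun f => f (Ordinal (Hn : (n < L.+1)%N))) (Hx L).2.
  by rewrite /s_aL.
exists x; split.
  split; first by move=> L; exact: (Hx L).1.
  move=> K L K1 KL; apply: inI_of_eq => //; first exact: (Hx L).1.
    exact: (Hx K).1.
  move=> n Hn; rewrite !Hx' //; lia.
by apply: functional_extensionality => n; rewrite /s_hat Hx'.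
Qed.

Lemma hat_br x y : OAhat a x -> OAhat a y ->
  s_hat a (OAhat_br x y) = sl2ps_br (s_hat a x) (s_hat a y).
Proof.
move=> hx hy; apply: functional_extensionality => n.
rewrite /s_hat /OAhat_br s_a_br // /sl2ps_br; apply: eq_bigr => i _.
rewrite -!/(s_hat a _ _) (compat hx (ltn_ord i)) (compat hy (n := (n - i)%N) (L := n.+1)) //.
by rewrite ltnS leq_subr.
Qed.

Lemma hat_ker L x : OAhat a x ->
  (in_OAhat_ker a L x <-> (forall n, (n < L)%N -> s_hat a x n = 0)).
Proof.
move=> hx; case: L => [|L].
  by split => // _; left.
split.
  move=> [//|/(vanish_of_inI a0 a2) [He Hf Hh]] n Hn.
  by rewrite (compat hx Hn) /s_a He ?Hf ?Hh.
move=> H; right; apply: inI_of_vanish => //; first exact: hx.1.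
- by move=> n Hn; have := H n Hn; rewrite (compat hx Hn) /s_a => -[].
- by move=> n Hn; have := H n Hn; rewrite (compat hx Hn) /s_a => -[].
- by move=> n Hn; have := H n Hn; rewrite (compat hx Hn) /s_a => -[].
Qed.

End Part2.

Local Open Scope complex_scope.

Theorem theorem3 (R : realType) (a : R[i]) :
  a != 0 -> a != 1 -> a != -1 ->
  (forall L : nat, (1 <= L)%N ->
     [/\ (forall x y, isOA x -> isOA y ->
            s_aL a L (loop_add x y) = sl2trunc_add (s_aL a L x) (s_aL a L y)),
         (forall (c : R[i]) x, isOA x ->
            s_aL a L (loop_scale c x) = sl2trunc_scale c (s_aL a L x)),
         (forall x y, isOA x -> isOA y ->
            s_aL a L (loop_br x y) = sl2trunc_br (s_aL a L x) (s_aL a L y)),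
         (forall x, isOA x -> (s_aL a L x = (fun=> 0) <-> inI (Ua a ^+ L) x)) &
         (forall y : sl2trunc _ L, exists x, isOA x /\ s_aL a L x = y)]) /\
  [/\ (forall x, OAhat a x -> forall L n, (n < L)%N -> s_hat a x n = s_a a (x L) n),
      (forall x y, OAhat a x -> OAhat a y ->
         (s_hat a x = s_hat a y <-> OAhat_eq a x y)),
      (forall g : sl2ps _, exists x, OAhat a x /\ s_hat a x = g),
      [/\ (forall x y, OAhat a x -> OAhat a y ->
             s_hat a (OAhat_add x y) = sl2ps_add (s_hat a x) (s_hat a y)),
          (forall (c : R[i]) x, OAhat a x ->
             s_hat a (OAhat_scale c x) = sl2ps_scale c (s_hat a x)) &
          (forall x y, OAhat a x -> OAhat a y ->
             s_hat a (OAhat_br x y) = sl2ps_br (s_hat a x) (s_hat a y))] &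
      (forall L x, OAhat a x ->
         (in_OAhat_ker a L x <-> (forall n, (n < L)%N -> s_hat a x n = 0)))].
Proof.
move=> a0 a1 am1.
have a2 : a ^+ 2 != 1 by rewrite sqrf_eq1 negb_or a1 am1.
split.
  move=> L _; split.
  - move=> x y _ _; apply: functional_extensionality => j.
    by rewrite /s_aL /sl2trunc_add s_a_add.
  - move=> c x _; apply: functional_extensionality => j.
    by rewrite /s_aL /sl2trunc_scale s_a_scale.
  - move=> x y _ _; apply: functional_extensionality => j.
    rewrite /s_aL /sl2trunc_br s_a_br //; apply: eq_bigr => i _.
    have Hi : (val i <= val j)%N by rewrite -ltnS (ltn_ord i).
    have Hj : (val j < L)%N := ltn_ord j.
    rewrite !val_insubd (ifT _ _ (leq_ltn_trans Hi Hj)).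
    by rewrite (ifT _ _ (leq_ltn_trans (leq_subr _ _) Hj)).
  - move=> x ox; split.
      by move/s_aL_zero => [He Hf Hh]; apply: inI_of_vanish.
    by move/(vanish_of_inI a0 a2) => [He Hf Hh]; apply/s_aL_zero.
  - by move=> y; apply: surjL.
split.
- exact: compat.
- exact: hat_inj.
- exact: hat_surj.
- split.
  + move=> x y _ _; apply: functional_extensionality => n.
    by rewrite /s_hat /OAhat_add s_a_add.
  + move=> c x _; apply: functional_extensionality => n.
    by rewrite /s_hat /OAhat_scale s_a_scale.
  + exact: hat_br.
- exact: hat_ker.
Qed.
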